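(* Assume $\sigma_1\equiv0$ and consider excess-of-loss reinsurance, with retention level $u\in[0,\infty]$, $m(t,y,u)=\theta\int_0^u\bar F(z)\,dz-(\theta-\eta)\mathbb E[Z]$ and $\sigma(t,y,u)=\sqrt{\int_0^u2z\bar F(z)\,dz}$. Then the optimal retention level is $$u^*(x)=\frac{\theta}{A(x)}.$$
   Context: $Z$ is a claim size with distribution function $F$ on $[0,\infty)$, $\bar F=1-F$, $\mathbb E[Z]<\infty$ and $F(z)<1$ for all $z\in[0,\infty)$; $\theta,\eta>0$ are the reinsurer's and the insurer's safety loadings. With retention $u_t$ and amount $a_t$ invested in a risky asset with drift $\mu(t,y)>0$ and volatility $\sigma_2(t,y)>0$ (driven by a Brownian motion $W^2$ independent of $W^1$; $\sigma_1\equiv0$), the surplus is $dX_t=\{m(t,Y_t,u_t)+a_t\mu(t,Y_t)\}dt+\sigma(t,Y_t,u_t)dW^1_t+a_t\sigma_2(t,Y_t)dW^2_t$, where $Y$ is an environmental diffusion, and the insurer maximises $\mathbb E[U(X_T)]$. The optimal retention is the maximiser in the HJB equation under the ansatz $V(t,x,y)=U(x)\tilde V(t,y)$ for the value function, i.e. the maximiser over $u\in[0,\infty]$ of $\theta\int_0^u\bar F(z)dz-\frac{A(x)}{2}\int_0^u2z\bar F(z)dz$. $U$ is a SAHARA utility: $A(x):=-U''(x)/U'(x)=\alpha/\sqrt{b^2+(x-d)^2}$, $\alpha>0$, $b>0$, $d\in\mathbb R$. *)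

(* Defs.v *)
From HB Require Import structures.
From mathcomp Require Import all_boot all_order all_algebra.
From mathcomp Require Import all_classical all_reals all_analysis.
Set Implicit Arguments. Unset Strict Implicit. Unset Printing Implicit Defensive.
Import Order.TTheory GRing.Theory Num.Theory.
Import numFieldNormedType.Exports.
Local Open Scope classical_set_scope.
Local Open Scope ring_scope.

Definition Fbar {R : realType} (F : R -> R) (z : R) : R := 1 - F z.

Definition is_cdf_on_nonneg {R : realType} (F : R -> R) : Prop :=
  {homo F : x y / x <= y} /\
  (forall x : R, F x @[y --> x^'+] --> F x) /\
  (forall z : R, z < 0 -> F z = 0) /\
  (F x @[x --> +oo] --> (1 : R)).

Definition Icc0 {R : realType} (u : \bar R) : set R :=
  [set z : R | 0 <= z /\ (z%:E <= u)%E].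

Definition sahara_A {R : realType} (alpha b d x : R) : R :=
  alpha / Num.sqrt (b ^+ 2 + (x - d) ^+ 2).

(* HJB objective in the retention u in [0, +oo]:
   theta * int_0^u Fbar - (A/2) * int_0^u 2 z Fbar(z) dz   (extended-real valued) *)
Definition retention_objective {R : realType} (F : R -> R) (theta Ax : R)
    (u : \bar R) : \bar R :=
  (theta%:E * (\int[lebesgue_measure]_(z in Icc0 u) (Fbar F z)%:E)
   - (Ax / 2)%:E * (\int[lebesgue_measure]_(z in Icc0 u) (2 * z * Fbar F z)%:E))%E.

(* Main.v *)
Require Import Defs.
From HB Require Import structures.
From mathcomp Require Import all_boot all_order all_algebra.
From mathcomp Require Import all_classical all_reals all_analysis.
From mathcomp Require Import measurable_realfun.
From mathcomp Require Import ring lra.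
Import Order.TTheory GRing.Theory Num.Theory.
Import numFieldNormedType.Exports.
Local Open Scope classical_set_scope.
Local Open Scope ring_scope.

Section S.
Context {R : realType}.
Notation mu := (@lebesgue_measure R).

Lemma bdd_int (D : set R) (h : R -> R) (M : R) : measurable D ->
  (mu D < +oo)%E -> measurable_fun D h -> (forall z, D z -> `|h z| <= M) ->
  mu.-integrable D (EFin \o h).
Proof.
move=> mD Dfin mh hM; apply: measurable_bounded_integrable => //.
rewrite /bounded_near; near=> N => z Dz /=; apply: le_trans (hM z Dz) _.
near: N; exact: nbhs_pinfty_ge (num_real M).
Unshelve. all: by end_near. Qed.

Lemma itv_fin (a b : R) : (mu `[a, b] < +oo)%E.
Proof. by rewrite lebesgue_measure_itv/=; case: ifP => // _; rewrite -EFinD ltry. Qed.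
Lemma itv_fin2 (a b : R) : (mu `]a, b] < +oo)%E.
Proof. by rewrite lebesgue_measure_itv/=; case: ifP => // _; rewrite -EFinD ltry. Qed.


Variables (F : R -> R) (Fmono : {homo F : x y / x <= y})
  (Flt : forall z, F z < 1) (Fge : forall z, 0 <= F z).

Lemma Fbar_gt0 z : 0 < Fbar F z.
Proof. by rewrite /Fbar subr_gt0. Qed.
Lemma Fbar_le1 z : Fbar F z <= 1.
Proof. by rewrite /Fbar lerBlDr lerDl. Qed.
Lemma Fbar_anti z y : z <= y -> Fbar F y <= Fbar F z.
Proof. by move=> zy; rewrite /Fbar lerB // Fmono. Qed.

Lemma mFbar (D : set R) : measurable D -> measurable_fun D (Fbar F).
Proof.
move=> mD; apply: (@measurable_funB _ _ _ _ (cst 1) F) => //; exact: nondecreasing_measurable.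
Qed.

Lemma mlin (D : set R) (p q : R) : measurable D ->
  measurable_fun D (fun z => (p + q * z) * Fbar F z).
Proof.
move=> mD; apply: measurable_funM; last exact: mFbar.
apply: measurable_funD => //; apply: measurable_funM => //.
Qed.

Lemma int_lin (r p q : R) (D : set R) : measurable D -> D `<=` `[0, r] ->
  mu.-integrable D (EFin \o (fun z => (p + q * z) * Fbar F z)).
Proof.
move=> mD Dsub; apply: (@integrableS _ _ _ mu _ _ _ (measurable_itv _) mD Dsub).
apply: (@bdd_int _ _ (`|p| + `|q| * `|r|)) => //.
- exact: itv_fin.
- exact: mlin.
move=> z; rewrite /= in_itv/= => /andP[z0 zr].
rewrite normrM (ger0_norm (ltW (Fbar_gt0 z))).
apply: (le_trans (ler_piMr _ (Fbar_le1 z))) => //.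
apply: (le_trans (ler_normD _ _)); rewrite lerD2l normrM ler_wpM2l//.
by rewrite !ger0_norm// (le_trans z0).
Qed.


Lemma int_any (r p q : R) (D : set R) (h : R -> R) : measurable D ->
  D `<=` `[0, r] -> (forall z, h z = (p + q * z) * Fbar F z) ->
  mu.-integrable D (EFin \o h).
Proof.
move=> mD Dsub hE; have -> : h = (fun z => (p + q * z) * Fbar F z).
  by apply/funext => z; rewrite hE.
exact (@int_lin r p q D mD Dsub).
Qed.

Lemma int_cst (r c : R) (D : set R) : measurable D -> D `<=` `[0, r] ->
  mu.-integrable D (EFin \o (fun _ : R => c)).
Proof.
move=> mD Dsub; apply: (@integrableS _ _ _ mu _ _ _ (measurable_itv _) mD Dsub).
apply: (@bdd_int _ _ `|c|) => //. exact (itv_fin 0 r).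
Qed.

Variables (theta A us : R) (A0 : 0 < A) (us0 : 0 < us) (Ath : theta = A * us).

Definition g (z : R) : R := (theta + (- A) * z) * Fbar F z.
Definition P (r : R) : R := Rintegral mu `[0, r]%classic (fun z => Fbar F z).
Definition Q (r : R) : R := Rintegral mu `[0, r]%classic (fun z => 2 * z * Fbar F z).

Lemma Icc0_fin (r : R) : @Icc0 R r%:E = `[0, r]%classic.
Proof.
apply/seteqP; split => z /=; rewrite in_itv/= /Icc0/= lee_fin; [by case=> -> ->|by case/andP=> -> ->].
Qed.

Lemma intE (D : set R) (h : R -> R) : measurable D ->
  mu.-integrable D (EFin \o h) ->
  (\int[mu]_(x in D) (h x)%:E)%E = (Rintegral mu D h)%:E.
Proof. by move=> mD ih; rewrite /Rintegral fineK //; exact: integrable_fin_num ih. Qed.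

Lemma obj_fin r : 0 <= r ->
  retention_objective F theta A r%:E = (theta * P r - A / 2 * Q r)%:E.
Proof.
move=> r0; rewrite /retention_objective Icc0_fin.
have i1 : mu.-integrable `[0, r] (EFin \o Fbar F).
  by apply: (@int_any r 1 0) => // z; rewrite mul0r addr0 mul1r.
have i2 : mu.-integrable `[0, r] (EFin \o (fun z => 2 * z * Fbar F z)).
  by apply: (@int_any r 0 2) => // z; rewrite add0r.
rewrite (@intE _ _ (measurable_itv _) i1) (@intE _ _ (measurable_itv _) i2).
by rewrite -!EFinM -EFinB.
Qed.


Lemma diffPQ (v w : R) : 0 <= v -> v <= w ->
  (theta * P w - A / 2 * Q w) - (theta * P v - A / 2 * Q v) =
  Rintegral mu `]v, w]%classic g.
Proof.
move=> v0 vw.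
have i1 : mu.-integrable `[0, w] (EFin \o Fbar F).
  by apply: (@int_any w 1 0) => // z; rewrite mul0r addr0 mul1r.
have i2 : mu.-integrable `[0, w] (EFin \o (fun z => 2 * z * Fbar F z)).
  by apply: (@int_any w 0 2) => // z; rewrite add0r.
have e1 := Rintegral_itvB i1 (x:=v) _ _.
have e2 := Rintegral_itvB i2 (x:=v) _ _.
rewrite /= !bnd_simp in e1 e2.
have sub : `]v, w]%classic `<=` `[0, w]%classic.
  by move=> z; rewrite /= !in_itv/= => /andP[vz ->]; rewrite (le_trans v0)// ltW.
have j1 : mu.-integrable `]v, w] (EFin \o (fun z => theta * Fbar F z)).
  by apply: (@int_any w theta 0) => // z; rewrite mul0r addr0.
have j2 : mu.-integrable `]v, w] (EFin \o (fun z => A / 2 * (2 * z * Fbar F z))).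
  by apply: (@int_any w 0 A) => // z; rewrite add0r mulrA mulrA divfK ?pnatr_eq0.
have k1 : mu.-integrable `]v, w] (EFin \o Fbar F).
  by apply: (@int_any w 1 0) => // z; rewrite mul0r addr0 mul1r.
have k2 : mu.-integrable `]v, w] (EFin \o (fun z => 2 * z * Fbar F z)).
  by apply: (@int_any w 0 2) => // z; rewrite add0r.
have -> : Rintegral mu `]v, w]%classic g = Rintegral mu `]v, w]%classic (fun z => theta * Fbar F z - A / 2 * (2 * z * Fbar F z)).
  by apply: eq_Rintegral => z _; rewrite /g; field.
rewrite (RintegralB _ j1 j2); last exact: measurable_itv.
rewrite (RintegralZl _ _ k1); last exact: measurable_itv.
rewrite (RintegralZl _ _ k2); last exact: measurable_itv.
rewrite /P /Q -e1 // -e2 //; ring.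
Qed.


Lemma g_int (r u w : R) : 0 <= u -> w <= r ->
  mu.-integrable `]u, w] (EFin \o g).
Proof.
move=> u0 wr; apply: (@int_any r theta (- A)) => //.
by move=> z; rewrite /= !in_itv/= => /andP[uz zw]; rewrite (le_trans u0 (ltW uz)) (le_trans zw wr).
Qed.

Lemma c_int (r u w c : R) : 0 <= u -> w <= r ->
  mu.-integrable `]u, w] (EFin \o (fun _ : R => c)).
Proof.
move=> u0 wr; apply: (@int_cst r c) => //.
by move=> z; rewrite /= !in_itv/= => /andP[uz zw]; rewrite (le_trans u0 (ltW uz)) (le_trans zw wr).
Qed.

Lemma split3 (u m w : R) : 0 <= u -> u <= m -> m <= w ->
  Rintegral mu `]u, w]%classic g =
  Rintegral mu `]u, m]%classic g + Rintegral mu `]m, w]%classic g.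
Proof.
move=> u0 um mw.
have e := Rintegral_itvB (@g_int w u w u0 (lexx w)) (x:=m) _ _.
rewrite /= !bnd_simp in e.
by rewrite -e // addrC subrK.
Qed.

Lemma mu_oc (u m : R) : u < m -> fine (mu `]u, m]%classic) = m - u.
Proof. by move=> um; rewrite lebesgue_measure_itv/= lte_fin um. Qed.


Lemma pw1 (m z : R) : m < us -> z <= m ->
  (theta - A * m) * Fbar F us <= g z.
Proof.
move=> mus zm; have fz := @Fbar_anti z us (le_trans zm (ltW mus)).
have fus := Fbar_gt0 us.
have h1 : 0 <= A * (m - z) by rewrite mulr_ge0 ?subr_ge0 // ltW.
have h2 : 0 <= A * (us - m) by rewrite mulr_ge0 ?subr_ge0 // ltW.
rewrite /g Ath; nra.
Qed.

Lemma pw2 (z : R) : z <= us -> 0 <= g z.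
Proof.
move=> zus; have fz := Fbar_gt0 z.
have h1 : 0 <= A * (us - z) by rewrite mulr_ge0 ?subr_ge0 // ltW.
rewrite /g Ath; nra.
Qed.

Lemma pw3 (z : R) : us <= z -> g z <= 0.
Proof.
move=> zus; have fz := Fbar_gt0 z.
have h1 : 0 <= A * (z - us) by rewrite mulr_ge0 ?subr_ge0 // ltW.
rewrite /g Ath; nra.
Qed.

Lemma pw4 (m w z : R) : us < m -> m <= z -> z <= w ->
  g z <= (theta - A * m) * Fbar F w.
Proof.
move=> usm mz zw; have fz := @Fbar_anti z w zw.
have fw := Fbar_gt0 w.
have h1 : 0 <= A * (z - m) by rewrite mulr_ge0 ?subr_ge0 // ltW.
have h2 : 0 <= A * (m - us) by rewrite mulr_ge0 ?subr_ge0 // ltW.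
rewrite /g Ath; nra.
Qed.

Lemma pos_part (u : R) : 0 <= u -> u < us ->
  0 < Rintegral mu `]u, us]%classic g.
Proof.
move=> u0 uus; set m := (u + us) / 2.
have um : u < m by rewrite /m; lra.
have mus : m < us by rewrite /m; lra.
rewrite (@split3 u m us) //; try exact: ltW.
set c := (theta - A * m) * Fbar F us.
have c0 : 0 < c.
  rewrite /c mulr_gt0 ?Fbar_gt0 // Ath subr_gt0 ltr_pM2l //.
have h2 : 0 <= Rintegral mu `]m, us]%classic g.
  apply: Rintegral_ge0 => z; rewrite /= in_itv/= => /andP[mz zus].
  exact: pw2.
have h1 : Rintegral mu `]u, m]%classic (fun _ => c) <= Rintegral mu `]u, m]%classic g.
  apply: le_Rintegral; first exact: measurable_itv.
  - exact: (@c_int us u m c u0 (ltW mus)).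
  - exact: (@g_int us u m u0 (ltW mus)).
  move=> z; rewrite /= in_itv/= => /andP[uz zm].
  exact: pw1.
rewrite Rintegral_cst in h1; last exact: measurable_itv.
rewrite mu_oc // in h1.
apply: (lt_le_trans _ (lerD h1 h2)); rewrite addr0 mulr_gt0 // subr_gt0; exact: um.
Qed.

Lemma neg_part (w : R) : us < w ->
  Rintegral mu `]us, w]%classic g < 0.
Proof.
move=> usw; set m := (us + w) / 2.
have usm : us < m by rewrite /m; lra.
have mw : m < w by rewrite /m; lra.
rewrite (@split3 us m w) //; try exact: ltW.
set c := (theta - A * m) * Fbar F w.
have c0 : c < 0.
  rewrite /c pmulr_llt0 ?Fbar_gt0 // Ath subr_lt0 ltr_pM2l //.
have h2 : Rintegral mu `]us, m]%classic g <= Rintegral mu `]us, m]%classic (fun _ => 0).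
  apply: le_Rintegral; first exact: measurable_itv.
  - exact: (@g_int w us m (ltW us0) (ltW mw)).
  - exact: (@c_int w us m 0 (ltW us0) (ltW mw)).
  move=> z; rewrite /= in_itv/= => /andP[uz zm].
  exact/pw3/ltW.
have h1 : Rintegral mu `]m, w]%classic g <= Rintegral mu `]m, w]%classic (fun _ => c).
  apply: le_Rintegral; first exact: measurable_itv.
  - exact: (@g_int w m w (ltW (lt_trans us0 usm)) (lexx w)).
  - exact: (@c_int w m w c (ltW (lt_trans us0 usm)) (lexx w)).
  move=> z; rewrite /= in_itv/= => /andP[mz zw].
  exact: pw4 (ltW mz) zw.
rewrite Rintegral_cst in h1; last exact: measurable_itv.
rewrite Rintegral_cst in h2; last exact: measurable_itv.
rewrite mu_oc // in h1.
rewrite mul0r in h2.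
apply: (le_lt_trans (lerD h2 h1)); rewrite add0r nmulr_rlt0 // subr_gt0; exact: mw.
Qed.


Lemma fin_strict (r : R) : 0 <= r -> r != us ->
  (retention_objective F theta A r%:E < retention_objective F theta A us%:E)%E.
Proof.
move=> r0 rus; rewrite !obj_fin // ?(ltW us0) // lte_fin.
have [rlt|rgt] := ltP r us.
  by rewrite -subr_gt0 diffPQ // ?(ltW rlt) //; exact: pos_part.
have usr : us < r by rewrite lt_neqAle eq_sym rus rgt.
by rewrite -subr_lt0 diffPQ // ?(ltW us0) // ?(ltW usr) //; exact: neg_part.
Qed.

Lemma mlin' (D : set R) (p q : R) (h : R -> R) : measurable D ->
  (forall z, h z = (p + q * z) * Fbar F z) -> measurable_fun D h.
Proof.
move=> mD hE; have -> : h = (fun z => (p + q * z) * Fbar F z).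
  by apply/funext => z; rewrite hE.
exact: mlin.
Qed.


Lemma pw5 (z : R) : us <= z -> theta * Fbar F z <= A / 2 * (2 * z * Fbar F z).
Proof.
move=> zus; have fz := Fbar_gt0 z.
have h1 : 0 <= A * (z - us) by rewrite mulr_ge0 ?subr_ge0 // ltW.
have -> : A / 2 * (2 * z * Fbar F z) = A * z * Fbar F z by field.
rewrite Ath; nra.
Qed.

Lemma obj_inf : (\int[mu]_(z in Icc0 +oo) (Fbar F z)%:E < +oo)%E ->
  (retention_objective F theta A +oo < retention_objective F theta A us%:E)%E.
Proof.
move=> fin.
set w := us + 1.
have usw : us < w by rewrite /w ltrDl.
have w0 : 0 <= w by rewrite ltW // (lt_trans us0).
have eI : @Icc0 R +oo = `[0, w]%classic `|` `]w, +oo[%classic.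
  apply/seteqP; split => z /=; rewrite !in_itv/= /Icc0/= ?andbT.
  - by move=> [z0 _]; have [zw|wz] := leP z w; [left; rewrite z0 | right].
  - move=> [/andP[z0 _]|wz]; split; rewrite ?leey //.
    by rewrite (le_trans w0) // ltW.
have mU : measurable (`[0, w]%classic `|` `]w, +oo[%classic : set R).
  by apply: measurableU; exact: measurable_itv.
have mf1 : measurable_fun (`[0, w]%classic `|` `]w, +oo[%classic) (fun z => (Fbar F z)%:E).
  by apply/measurable_EFinP; exact: mFbar.
have mf2 : measurable_fun (`[0, w]%classic `|` `]w, +oo[%classic) (fun z => (2 * z * Fbar F z)%:E).
  by apply/measurable_EFinP; apply: (@mlin' _ 0 2) => // z; rewrite add0r.
have nn1 : forall z, (`[0, w]%classic `|` `]w, +oo[%classic) z -> (0 <= (Fbar F z)%:E)%E.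
  by move=> z _; rewrite lee_fin ltW // Fbar_gt0.
have nn2 : forall z, (`[0, w]%classic `|` `]w, +oo[%classic) z -> (0 <= (2 * z * Fbar F z)%:E)%E.
  move=> z; rewrite /= !in_itv/= andbT => zz; rewrite lee_fin mulr_ge0 ?mulr_ge0 ?(ltW (Fbar_gt0 z)) //.
  by case: zz => [/andP[]//|wz]; rewrite (le_trans w0) // ltW.
rewrite /retention_objective eI in fin *.
rewrite ge0_integral_setU; last 5 first.
- exact (measurable_itv _).
- exact (measurable_itv _).
- exact mf1.
- exact nn1.
- apply/disj_setPS => z [] /=; rewrite !in_itv/= andbT => /andP[_ zw] wz.
  by move: (lt_le_trans wz zw); rewrite ltxx.
rewrite ge0_integral_setU; last 5 first.
- exact (measurable_itv _).
- exact (measurable_itv _).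
- exact mf2.
- exact nn2.
- apply/disj_setPS => z [] /=; rewrite !in_itv/= andbT => /andP[_ zw] wz.
  by move: (lt_le_trans wz zw); rewrite ltxx.
rewrite ge0_integral_setU in fin; last 5 first.
- exact (measurable_itv _).
- exact (measurable_itv _).
- exact mf1.
- exact nn1.
- apply/disj_setPS => z [] /=; rewrite !in_itv/= andbT => /andP[_ zw] wz.
  by move: (lt_le_trans wz zw); rewrite ltxx.
have wus : w != us by rewrite gt_eqF.
have hs := @fin_strict w w0 wus; rewrite /retention_objective Icc0_fin in hs.
apply: (le_lt_trans _ hs).
have i1 : mu.-integrable `[0, w] (EFin \o Fbar F).
  by apply: (@int_any w 1 0) => // z; rewrite mul0r addr0 mul1r.
have i2 : mu.-integrable `[0, w] (EFin \o (fun z => 2 * z * Fbar F z)).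
  by apply: (@int_any w 0 2) => // z; rewrite add0r.
rewrite (@intE _ _ (measurable_itv _) i1) (@intE _ _ (measurable_itv _) i2) in fin *.
set x1 := Rintegral _ _ _ in fin *.
set x2 := Rintegral _ _ _.
set T1 := (\int[mu]_(x in `]w, +oo[%classic) (Fbar F x)%:E)%E in fin *.
set T2 := (\int[mu]_(x in `]w, +oo[%classic) (2 * x * Fbar F x)%:E)%E.
have T10 : (0 <= T1)%E by apply: integral_ge0 => z _; rewrite lee_fin ltW // Fbar_gt0.
have T20 : (0 <= T2)%E.
  apply: integral_ge0 => z; rewrite /= in_itv/= andbT => wz.
  by rewrite lee_fin mulr_ge0 ?mulr_ge0 ?(ltW (Fbar_gt0 z)) // (le_trans w0) // ltW.
have mI : measurable (`]w, +oo[%classic : set R) by exact: measurable_itv.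
have key : (theta%:E * T1 <= (A / 2)%:E * T2)%E.
  rewrite /T1 /T2 -ge0_integralZl_EFin; last 4 first.
  - exact (measurable_itv _).
  - by move=> z _; rewrite lee_fin ltW // Fbar_gt0.
  - exact (measurable_funS mU (fun z zz => or_intror zz) mf1).
  - by rewrite Ath mulr_ge0 // ltW.
  rewrite -ge0_integralZl_EFin; last 4 first.
  - exact (measurable_itv _).
  - by move=> z zz; apply: nn2; right.
  - exact (measurable_funS mU (fun z zz => or_intror zz) mf2).
  - by rewrite divr_ge0 // ltW.
  apply: ge0_le_integral.
  - exact (measurable_itv _).
  - by move=> z _; rewrite -EFinM lee_fin mulr_ge0 ?Ath ?mulr_ge0 // ltW // Fbar_gt0.
  - apply: emeasurable_funM; first exact: measurable_cst.
    exact (measurable_funS mU (fun z zz => or_intror zz) mf1).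
  - apply: emeasurable_funM; first exact: measurable_cst.
    exact (measurable_funS mU (fun z zz => or_intror zz) mf2).
  move=> z; rewrite /= in_itv/= andbT => wz.
  by rewrite -!EFinM lee_fin pw5 // ltW // (lt_trans usw).
clearbody T1 T2.
case: T1 fin key T10 => [t1 _ key _| |] //.
case: T2 key T20 => [t2 key _| _ _|] //.
  rewrite -!EFinD lee_fin; rewrite -!EFinM lee_fin in key; nra.
rewrite addey // mulry gtr0_sg ?divr_gt0 // mul1e.
by rewrite -EFinD -EFinM addeNy leNye.
Qed.

End S.

Theorem corollary5p8 (R : realType) (F : R -> R) (theta eta alpha b d x : R) :
  is_cdf_on_nonneg F ->
  (forall z : R, 0 <= z -> F z < 1) ->
  (\int[lebesgue_measure]_(z in Icc0 (+oo)%E) (Fbar F z)%:E < +oo)%E ->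
  0 < theta -> 0 < eta -> 0 < alpha -> 0 < b ->
  let ustar := theta / sahara_A alpha b d x in
  (forall u : \bar R, (0 <= u)%E ->
     (retention_objective F theta (sahara_A alpha b d x) u
      <= retention_objective F theta (sahara_A alpha b d x) ustar%:E)%E) /\
  (forall u : \bar R, (0 <= u)%E ->
     retention_objective F theta (sahara_A alpha b d x) u
     = retention_objective F theta (sahara_A alpha b d x) ustar%:E ->
     u = ustar%:E).
Proof.
move=> [Fmono [_ [Fneg _]]] Flt1 fin th0 _ al0 b0 ustar.
have A0 : 0 < sahara_A alpha b d x.
  rewrite /sahara_A divr_gt0 // sqrtr_gt0.
  by apply: (lt_le_trans (exprn_gt0 2 b0)); rewrite lerDl sqr_ge0.
have Fge z : 0 <= F z.
  have [z0|z0] := ltP z 0; first by rewrite Fneg.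
  by rewrite -(Fneg (-1)) ?Fmono //; apply: le_trans z0; rewrite lerN10.
have Flt z : F z < 1.
  have [z0|z0] := ltP z 0; first by rewrite Fneg.
  exact: Flt1.
have us0 : 0 < ustar by rewrite /ustar divr_gt0.
have Ath : theta = sahara_A alpha b d x * ustar.
  by rewrite /ustar mulrC divfK // gt_eqF.
have strict : forall u : \bar R, (0 <= u)%E -> u != ustar%:E ->
  (retention_objective F theta (sahara_A alpha b d x) u
   < retention_objective F theta (sahara_A alpha b d x) ustar%:E)%E.
  case => [r| |] //= r0 ne.
    by apply: (@fin_strict R F Fmono Flt Fge theta _ ustar A0 us0 Ath); rewrite -?lee_fin //; apply: contra ne => /eqP ->.
  exact: (@obj_inf R F Fmono Flt Fge theta _ ustar A0 us0 Ath fin).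
split.
  move=> u u0; have [->|ne] := eqVneq u ustar%:E; first exact: lexx.
  exact/ltW/strict.
move=> u u0 ueq; apply/eqP; apply/negPn/negP => ne.
by have := strict u u0 ne; rewrite ueq ltxx.
Qed.
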